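(* Let $x,y$ be sequences, $n=|x|+|y|\ge 2$, and let $0<t\le 1/4$. Let $L$ be a longest common subsequence of $x$ and $y$ with $|L|=n^{3/4+t}$. Let $f$ be a power of $2$ with $1\le f<n^{1/4}$ such that $L'=\mathsf{Project}(L,\Sigma_{[f..2f)}(L))$ satisfies $|L'|\ge |L|/(2\log_2 n)$. Let $x'=\mathsf{Project}(x,\Sigma_{[f..n]}(x))$, and let $\pi$ be a repetition-free sequence whose set of symbols is exactly the set of symbols occurring in $x'$. Let $R$ be a subsequence of $L'$ containing exactly one occurrence of each symbol occurring in $L'$, and assume $|\mathsf{LIS}_\pi(R)|<n^t/\log_2 n$. Consider any run of the peeling process on $x'$: $x^0=x'$, and while $x^i$ is nonempty, $\pi^i$ is any subsequence of $x^i$ that is strictly decreasing with respect to $<_\pi$ with $|\pi^i|\ge|\mathsf{LDS}_\pi(x^i)|/2$, and $x^{i+1}=\mathsf{Exclude}(x^i,\pi^i)$. Then there is an iteration $i$ of this process with $|\mathsf{LIS}_{\pi^i}(y)|\ge n^t/200$.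
   Context: For a symbol $\sigma$, $\#_\sigma(x)$ is the number of occurrences of $\sigma$ in $x$; $\Sigma_{[a..b]}(x)=\{\sigma : a\le\#_\sigma(x)\le b\}$ and $\Sigma_{[a..b)}(x)=\{\sigma : a\le\#_\sigma(x)<b\}$. For a set $S$ of symbols (or a sequence, standing for its set of symbols), $\mathsf{Project}(x,S)$ is the subsequence of $x$ of entries whose symbol is in $S$, and $\mathsf{Exclude}(x,S)$ the subsequence of entries whose symbol is not in $S$. A sequence is repetition-free if its entries are pairwise distinct; a repetition-free $\pi=\pi_1\dots\pi_k$ defines the strict total order $\pi_i<_\pi\pi_j$ iff $i<j$. For any sequence $x$, $\mathsf{LIS}_\pi(x)$ (resp. $\mathsf{LDS}_\pi(x)$) is a longest subsequence of $\mathsf{Project}(x,\pi)$ that is strictly increasing (resp. strictly decreasing) with respect to $<_\pi$. *)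

(* Defs.v *)
From mathcomp Require Import all_boot.
From Stdlib Require Import Reals.
Set Implicit Arguments. Unset Strict Implicit. Unset Printing Implicit Defensive.

Section Defs.
Variable T : eqType.

Definition sigma_cc (a b : nat) (x : seq T) : pred T :=
  fun s => (a <= count_mem s x <= b)%N.
Definition sigma_co (a b : nat) (x : seq T) : pred T :=
  fun s => (a <= count_mem s x < b)%N.

Definition Project (x : seq T) (S : pred T) : seq T := filter S x.
Definition Exclude (x : seq T) (S : pred T) : seq T := filter (predC S) x.

Definition lt_pi (pi : seq T) : rel T :=
  fun a b => [&& a \in pi, b \in pi & (index a pi < index b pi)%N].

Definition lis_len (pi x : seq T) : nat :=
  let s := Project x (mem pi) in
  \max_(m : (size s).-tuple bool | sorted (lt_pi pi) (mask m s)) size (mask m s).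

Definition lds_len (pi x : seq T) : nat :=
  let s := Project x (mem pi) in
  \max_(m : (size s).-tuple bool | sorted (fun a b => lt_pi pi b a) (mask m s))
     size (mask m s).

Definition is_lcs (L x y : seq T) : Prop :=
  [/\ subseq L x, subseq L y &
      forall L', subseq L' x -> subseq L' y -> (size L' <= size L)%N].

(* A complete run of the peeling process, starting from xi, whose chosen
   sequences are pis = [:: pi^i; pi^{i+1}; ...]; it stops exactly when the
   current sequence becomes empty. *)
Fixpoint peel_run (pi xi : seq T) (pis : seq (seq T)) : Prop :=
  match pis with
  | [::] => xi = [::]
  | p :: pis' =>
      [/\ xi <> [::], subseq p xi,
          sorted (fun a b => lt_pi pi b a) p,
          (lds_len pi xi <= 2 * size p)%N &
          peel_run pi (Exclude xi (mem p)) pis']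
  end.
End Defs.

Definition log2R (r : R) : R := (ln r / ln 2)%R.

(* Main.v *)
Require Import Defs.
From mathcomp Require Import all_boot.
From Stdlib Require Import Reals.
From mathcomp Require Import zify.
From Stdlib Require Import Lra Psatz Classical.
Set Implicit Arguments. Unset Strict Implicit. Unset Printing Implicit Defensive.

Section Comb.
Variable T : eqType.
Implicit Types (s u w : seq T).

Definition best (P : pred (seq T)) u : nat :=
  \max_(m : (size u).-tuple bool | P (mask m u)) size (mask m u).

Lemma best_ub (P : pred (seq T)) u w : subseq w u -> P w -> size w <= best P u.
Proof.
case/subseqP=> m sm ->{w} Pw.
have sm' : size m == size u by apply/eqP.
exact: (leq_bigmax_cond (Tuple sm') Pw).
Qed.

Lemma best_ex (P : pred (seq T)) u : P [::] ->
  exists2 w, subseq w u & P w && (size w == best P u).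
Proof.
move=> P0.
have nz : 0 < #|[pred m : (size u).-tuple bool | P (mask m u)]|.
  apply/card_gt0P; exists (nseq_tuple (size u) false).
  by rewrite inE /= mask_false.
have [m Pm E] := eq_bigmax_cond (fun m : (size u).-tuple bool => size (mask m u)) nz.
exists (mask m u); first exact: mask_subseq.
rewrite inE in Pm; rewrite Pm /best /=.
by apply/eqP; rewrite -E.
Qed.

Lemma best_mono (P : pred (seq T)) u v : P [::] -> subseq u v -> best P u <= best P v.
Proof.
move=> P0 suv; have [w swu /andP[Pw /eqP <-]] := best_ex u P0.
apply: best_ub => //; exact: subseq_trans swu suv.
Qed.

Lemma size_count_part (g : T -> nat) K s : (forall c, c \in s -> g c < K) ->
  size s = \sum_(v < K) count (fun c => g c == v) s.
Proof.
elim: s => [|a s IH] H /=; first by rewrite big1.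
rewrite big_split /= -IH; last by move=> c cs; apply: H; rewrite inE cs orbT.
have ha : g a < K by apply: H; rewrite inE eqxx.
rewrite (bigD1 (Ordinal ha)) //= big1 ?addn0.
  by rewrite eqxx add1n.
move=> j jn; apply/eqP; rewrite eqb0; apply: contra jn => /eqP E.
by apply/eqP/val_inj; rewrite /= E.
Qed.

Variable lt : rel T.
Hypothesis irr : irreflexive lt.
Hypothesis tr : transitive lt.
Let gt := fun a b => lt b a.

Lemma tr_gt : transitive gt.
Proof. by move=> b a c hab hbc; rewrite /gt; apply: tr hbc hab. Qed.

Lemma ES s : uniq s -> {in s &, forall a b, a != b -> lt a b || lt b a} ->
  size s <= best (sorted lt) s * best (sorted gt) s.
Proof.
move=> us tot.
pose h a := best (sorted lt) (filter (lt a) (drop (index a s).+1 s)).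
set l := best (sorted lt) s.
have h1 : forall a, a \in s -> h a < l.
  move=> a as_.
  have [w sw /andP[ow E]] := best_ex (filter (lt a) (drop (index a s).+1 s)) (isT : sorted lt [::]).
  rewrite /h -(eqP E).
  have : size (a :: w) <= l.
    apply: best_ub; last first.
      by rewrite /= path_sortedE // ow andbT; move: sw; rewrite subseq_filter => /andP[].
    rewrite subseq_filter in sw; case/andP: sw => _ sw.
    apply: (@subseq_trans _ (drop (index a s) s)); last exact: drop_subseq.
    by rewrite (drop_nth a) ?index_mem // nth_index //= eqxx.
  by [].
have h2 : forall a b, a \in s -> b \in s -> index a s < index b s -> lt a b -> h b < h a.
  move=> a b as_ bs iab lab.
  have [w sw /andP[ow E]] := best_ex (filter (lt b) (drop (index b s).+1 s)) (isT : sorted lt [::]).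
  rewrite {1}/h -(eqP E).
  have : size (b :: w) <= h a.
    rewrite subseq_filter in sw; case/andP: sw => aw sw.
    apply: best_ub; last by rewrite /= path_sortedE // ow aw.
    rewrite subseq_filter /= lab /=; apply/andP; split.
      by apply/allP => c cw; apply: (tr lab); move/allP: aw; apply.
    apply: (@subseq_trans _ (drop (index b s) s)); last first.
      by rewrite -(subnK iab) -drop_drop drop_subseq.
    by rewrite (drop_nth b) ?index_mem // nth_index //= eqxx.
  by [].
have pw : pairwise (fun a b => (h a == h b) ==> gt a b) s.
  case Es: s => [|x0 s']; first by []. rewrite -Es.
  apply/(pairwiseP x0) => i j ilt jlt ij.
  apply/implyP => /eqP Eh.
  have ai : nth x0 s i \in s by rewrite mem_nth.
  have bj : nth x0 s j \in s by rewrite mem_nth.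
  case: (boolP (lt (nth x0 s i) (nth x0 s j))) => lij.
    have := h2 _ _ ai bj; rewrite !index_uniq // => /(_ ij lij).
    by rewrite Eh ltnn.
  have := tot _ _ ai bj; rewrite nth_uniq // (negbTE lij) /=.
  by apply; rewrite neq_ltn ij.
rewrite (size_count_part h1).
apply: (@leq_trans (\sum_(v < l) best (sorted gt) s)); last first.
  by rewrite sum_nat_const card_ord.
apply: leq_sum => v _.
rewrite -size_filter; apply: best_ub; first exact: filter_subseq.
rewrite sorted_pairwise; last exact: tr_gt.
apply: (@sub_in_pairwise _ (fun c => h c == v) (fun a b => (h a == h b) ==> gt a b)).
- by move=> a b /eqP ha /eqP hb /=; rewrite ha hb eqxx.
- by apply/allP => c; rewrite mem_filter => /andP[].
- exact: pairwise_filter.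
Qed.
End Comb.

Section Pi.
Variable T : eqType.
Implicit Types (s u w pi p : seq T).

Lemma ltpi_irr pi : irreflexive (lt_pi pi).
Proof. by move=> a; rewrite /lt_pi ltnn !andbF. Qed.

Lemma ltpi_tr pi : transitive (lt_pi pi).
Proof.
move=> b a c /and3P[ha hb hab] /and3P[_ hc hbc].
by rewrite /lt_pi ha hc (ltn_trans hab hbc).
Qed.

Lemma ltpi_tot pi : {in pi &, forall a b, a != b -> lt_pi pi a b || lt_pi pi b a}.
Proof.
move=> a b ha hb neq; rewrite /lt_pi ha hb /=.
case: (ltngtP (index a pi) (index b pi)) => // E.
by move: neq; rewrite -(nth_index a ha) -(nth_index a hb) E eqxx.
Qed.

Lemma ES_pi pi s : uniq s -> {subset s <= pi} ->
  size s <= best (sorted (lt_pi pi)) s * best (sorted (fun a b => lt_pi pi b a)) s.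
Proof.
move=> us sp; refine (ES (@ltpi_tr pi) us _).
by move=> a b ha hb; apply: ltpi_tot; apply: sp.
Qed.

Lemma rev_order pi p a b : sorted (fun a b => lt_pi pi b a) p -> a \in p -> b \in p ->
  lt_pi pi b a -> lt_pi p a b.
Proof.
move=> sp ha hb lba; rewrite /lt_pi ha hb /=.
have pw : pairwise (fun a b => lt_pi pi b a) p.
  rewrite -sorted_pairwise //; move=> x z w h1 h2; exact: ltpi_tr h2 h1.
case: (ltngtP (index a p) (index b p)) => // E.
  move/(pairwiseP a): pw => pw.
  have := pw (index b p) (index a p).
  rewrite !inE !index_mem !nth_index // => /(_ hb ha E) lab.
  by have := ltpi_tr lab lba; rewrite ltpi_irr.
by move: lba; rewrite -(nth_index a ha) -(nth_index a hb) E ltpi_irr.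
Qed.

Lemma count_uniq_lb (f : nat) p s : uniq p -> (forall a, a \in p -> f <= count_mem a s) ->
  f * size p <= count (mem p) s.
Proof.
elim: p => [|a p IH] /=; first by rewrite muln0.
case/andP => anp up H.
have -> : count (mem (a :: p)) s = count (pred1 a) s + count (mem p) s.
  rewrite -count_predUI.
  rewrite (@eq_count _ (predI (pred1 a) (mem p)) pred0) ?count_pred0 ?addn0.
    by apply: eq_count => z; rewrite /= in_cons.
  by move=> z /=; case: eqP => // ->; rewrite (negbTE anp).
rewrite mulnS; apply: leq_add; first by apply: H; rewrite inE eqxx.
by apply: IH => // z zp; apply: H; rewrite inE zp orbT.
Qed.

Variables (pi y R0 : seq T) (f M : nat).
Hypotheses (R0pi : {subset R0 <= pi}) (uR0 : uniq R0) (R0y : subseq R0 y).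
Let l := best (sorted (lt_pi pi)) R0.

Lemma step_bounds xj p R : subseq R xj -> subseq R R0 ->
  sorted (fun a b => lt_pi pi b a) p -> (lds_len pi xj <= 2 * size p) ->
  size R <= l * (2 * size p) /\ count (mem p) R <= l * lis_len p y.
Proof.
move=> Rx RR0 sp hlds.
have uR : uniq R := subseq_uniq RR0 uR0.
have Rpi : {subset R <= pi} by move=> a /(mem_subseq RR0); apply: R0pi.
split.
  apply: leq_trans (ES_pi uR Rpi) _.
  apply: leq_mul; first exact: best_mono.
  apply: leq_trans hlds; apply: best_mono => //.
  rewrite subseq_filter Rx andbT; apply/allP => a /Rpi //.
set Rp := filter (mem p) R.
have RpR : subseq Rp R := filter_subseq _ _.
rewrite -size_filter.
apply: leq_trans (ES_pi (filter_uniq _ uR) (fun a h => Rpi a (mem_subseq RpR h))) _.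
apply: leq_mul; first by apply: best_mono => //; exact: subseq_trans RpR RR0.
have [w sw /andP[ow /eqP <-]] := best_ex Rp (isT : sorted (fun a b => lt_pi pi b a) [::]).
have wp : all (mem p) w.
  by apply/allP => a /(mem_subseq sw); rewrite mem_filter => /andP[].
apply: best_ub.
  rewrite subseq_filter wp /=.
  by apply: subseq_trans R0y; apply: subseq_trans RR0; apply: subseq_trans RpR.
apply: (@sub_in_sorted _ (mem p) (fun a b => lt_pi pi b a)) => //.
by move=> a b ha hb; apply: rev_order.
Qed.

Lemma peel_claim pis : forall xj R, peel_run pi xj pis -> subseq R xj -> subseq R R0 ->
  (forall a, a \in xj -> f <= count_mem a xj) -> (forall p, p \in pis -> lis_len p y <= M) ->
  (forall m, m * (size R - m * (l * M)) <= 2 * l * sumn (map size pis)) /\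
  f * sumn (map size pis) <= size xj.
Proof.
elim: pis => [|p pis IH] xj R /=.
  move=> -> ; rewrite subseq0 => /eqP -> _ _ _; split; last by rewrite muln0.
  by move=> m; rewrite sub0n muln0.
case => xne pxj sp hlds run Rx RR0 Hf HM.
have [hT hc] := step_bounds Rx RR0 sp hlds.
have hc' : count (mem p) R <= l * M.
  by apply: leq_trans hc (leq_mul (leqnn l) (HM p (mem_head _ _))).
set R' := filter (predC (mem p)) R.
have R'x : subseq R' (Exclude xj (mem p)).
  rewrite subseq_filter filter_all /=; exact: subseq_trans (filter_subseq _ _) Rx.
have R'R0 : subseq R' R0 := subseq_trans (filter_subseq _ _) RR0.
have Hf' : forall a, a \in Exclude xj (mem p) -> f <= count_mem a (Exclude xj (mem p)).
  move=> a; rewrite mem_filter => /andP[ha hax].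
  rewrite count_filter (@eq_count _ _ (pred1 a)); first exact: Hf.
  by move=> z /=; case: eqP => // ->; move: ha; rewrite /= => ->.
have HM' : forall q, q \in pis -> lis_len q y <= M.
  by move=> q qp; apply: HM; rewrite inE qp orbT.
have [IH1 IH2] := IH _ _ run R'x R'R0 Hf' HM'.
have sR' : size R' = size R - count (mem p) R.
  by rewrite size_filter -(count_predC (mem p) R) addKn.
split.
  case=> [|k]; first by rewrite mul0n.
  have := IH1 k; rewrite sR' => hk.
  set b := l * M in hc' hk *.
  have XY : size R - k.+1 * b <= size R - count (mem p) R - k * b.
    by rewrite mulSn subnDA; apply: leq_sub2r; apply: leq_sub2l.
  rewrite mulSn mulnDr.
  apply: leq_add.
    by apply: leq_trans (leq_subr _ _) (leq_trans hT _); rewrite mulnCA mulnA.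
  apply: leq_trans hk; exact: leq_mul.
have up : uniq p.
  apply: (sorted_uniq _ _ sp).
    by move=> b a c h1 h2; exact: ltpi_tr h2 h1.
  by move=> a; apply: ltpi_irr.
have := @count_uniq_lb f p xj up (fun a ap => Hf a (mem_subseq pxj ap)).
rewrite mulnDr => h1.
by rewrite -(count_predC (mem p) xj); apply: leq_add => //; rewrite -size_filter.
Qed.
End Pi.

Lemma nat_contra r b l S f n : (forall m, m*(r - m*b) <= 2*l*S) -> f*S <= n ->
  f*r*r <= 8*b*l*n + 4*f*b*b.
Proof.
move=> H HS.
case: (posnP b) => [b0|bpos].
  have := H (2*l*S).+1; rewrite b0 muln0 subn0.
  move=> h; have r0 : r = 0 by nia.
  by rewrite r0 !muln0.
set m := r %/ (2*b); set e := r %% (2*b).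
have Er : r = m * (2*b) + e by rewrite /m /e -divn_eq.
have he : e < 2*b by rewrite /e ltn_pmod // muln_gt0.
have Hm := H m.
have E1 : r - m*b = m*b + e by rewrite Er; lia.
rewrite E1 in Hm.
have A : f * (m*(m*b+e)) <= 2*l*n.
  apply: (leq_trans (leq_mul (leqnn f) Hm)).
  by rewrite mulnCA leq_mul2l HS orbT.
have E2 : e*e <= 4*b*b.
  by have := leq_mul (ltnW he) (ltnW he); nia.
rewrite Er. nia.
Qed.

Section RealPart.
Local Open Scope R_scope.
Lemma real_contra (q u lg f r l M L L' : R) :
  1 <= q -> 1 <= u -> u <= q -> 1 <= lg ->
  L = q*q*q*u -> L' >= L / (2 * lg) -> L' <= 2 * f * r ->
  0 <= l -> l < u / lg -> 0 <= M -> M < u / 200 -> 0 <= f -> f < q -> 0 <= r ->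
  f*r*r <= 8*(l*M)*l*(q*q*q*q) + 4*f*(l*M)*(l*M) -> False.
Proof.
intros Hq Hu Huq Hlg HL HL' H3 Hl0 Hl HM0 HM Hf0 Hf Hr Hm.
set (A := l * lg).
assert (HA0 : 0 <= A) by (unfold A; nra).
assert (HA : A < u).
{ unfold A. apply (Rmult_lt_compat_r lg) in Hl; [|lra].
  replace (u / lg * lg) with u in Hl by (field; lra). lra. }
set (X := f * r * lg).
assert (HX : q*q*q*u <= 4 * X).
{ unfold X. rewrite <- HL.
  assert (L / (2*lg) <= 2*f*r) by lra.
  apply (Rmult_le_compat_r (2*lg)) in H; [|lra].
  replace (L / (2 * lg) * (2 * lg)) with L in H by (field; lra). lra. }
assert (Hq3u : 0 < q*q*q*u) by (repeat apply Rmult_lt_0_compat; lra).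
assert (HX2 : (q*q*q*u) * (q*q*q*u) <= 16 * (X * X)) by nra.
assert (Hm' : X * X <= 8*f*(A*A)*M*(q*q*q*q) + 4*f*f*(A*A)*(M*M)).
{ unfold X, A.
  assert (0 <= f*lg*lg) by (repeat apply Rmult_le_pos; lra).
  apply (Rmult_le_compat_l (f*lg*lg)) in Hm; [|lra]. nra. }
assert (HM' : 200 * M < u).
{ apply (Rmult_lt_compat_r 200) in HM; [|lra].
  replace (u / 200 * 200) with u in HM by field. lra. }
assert (T1 : 8*f*(A*A)*M*(q*q*q*q) <= (q*q*q*u)*(q*q*q*u) / 25).
{ assert (A*A <= u*u) by nra.
  assert (f*(A*A) <= q*(u*u)).
  { apply Rmult_le_compat; try lra. nra. }
  assert (f*(A*A)*M <= q*(u*u)*(u/200)).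
  { apply Rmult_le_compat; try lra. apply Rmult_le_pos; nra. }
  assert (q*(u*u)*(u/200)*(q*q*q*q) <= (q*q*q*u)*(q*q*q*u)/200).
  { assert (0 <= q*(u*u)*(q*q*q*q)/200) by (repeat apply Rmult_le_pos; try apply Rdiv_le_0_compat; nra).
    nra. }
  assert (f*(A*A)*M*(q*q*q*q) <= q*(u*u)*(u/200)*(q*q*q*q)).
  { apply Rmult_le_compat_r; [nra|lra]. }
  lra. }
assert (T2 : 4*f*f*(A*A)*(M*M) <= (q*q*q*u)*(q*q*q*u) / 10000).
{ assert (f*f <= q*q) by nra.
  assert (A*A <= u*u) by nra.
  assert (M*M <= (u/200)*(u/200)) by nra.
  assert (f*f*(A*A) <= q*q*(u*u)).
  { apply Rmult_le_compat; try lra; nra. }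
  assert (f*f*(A*A)*(M*M) <= q*q*(u*u)*((u/200)*(u/200))).
  { apply Rmult_le_compat; try lra; nra. }
  assert (u*u <= q*q) by nra.
  assert (1 <= q*q) by nra.
  assert (q*q <= q*q*(q*q)).
  { rewrite <- (Rmult_1_r (q*q)) at 1. apply Rmult_le_compat_l; nra. }
  assert (u*u <= q*q*q*q) by lra.
  assert (q*q*(u*u)*(u*u) <= q*q*(u*u)*(q*q*q*q)).
  { apply Rmult_le_compat_l; [nra|lra]. }
  assert (q*q*(u*u)*(q*q*q*q) = (q*q*q*u)*(q*q*q*u)) by ring.
  assert (q*q*(u*u)*((u/200)*(u/200)) = q*q*(u*u)*(u*u) / 40000) by field.
  lra. }
nra.
Qed.
End RealPart.

Lemma sumn_bound (T : eqType) (g : T -> nat) K (u : seq T) :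
  (forall a, a \in u -> g a <= K) -> sumn (map g u) <= K * size u.
Proof.
elim: u => [|a u IH] H /=; first by rewrite muln0.
rewrite mulnS; apply: leq_add; first by apply: H; rewrite inE eqxx.
by apply: IH => z zu; apply: H; rewrite inE zu orbT.
Qed.

Lemma size_undup_bound (T : eqType) K (s : seq T) :
  (forall a, a \in s -> count_mem a s <= K) -> size s <= K * size (undup s).
Proof.
move=> H.
rewrite -(perm_size (perm_count_undup s)) size_flatten /shape -map_comp.
rewrite (@eq_map _ _ _ (fun x => count_mem x s)); last by move=> z /=; rewrite size_nseq.
by apply: sumn_bound => a; rewrite mem_undup; apply: H.
Qed.

Unset Implicit Arguments.
Set Strict Implicit.

Theorem mainTheorem6 (T : eqType) (x y : seq T) (t : R) (L : seq T) (f : nat)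
  (pi R0 : seq T) :
  let n := (size x + size y)%N in
  (2 <= n)%N ->
  (0 < t <= 1/4)%R ->
  is_lcs L x y ->
  INR (size L) = Rpower (INR n) (3/4 + t) ->
  (exists k : nat, f = 2 ^ k)%N ->
  (1 <= f)%N ->
  (INR f < Rpower (INR n) (1/4))%R ->
  let L' := Project L (sigma_co f (2 * f) L) in
  (INR (size L') >= INR (size L) / (2 * log2R (INR n)))%R ->
  let x' := Project x (sigma_cc f n x) in
  uniq pi -> (forall a, (a \in pi) = (a \in x')) ->
  subseq R0 L' -> uniq R0 -> (forall a, (a \in R0) = (a \in L')) ->
  (INR (lis_len pi R0) < Rpower (INR n) t / log2R (INR n))%R ->
  forall pis : seq (seq T), peel_run pi x' pis ->
  exists2 p, p \in pis & (INR (lis_len p y) >= Rpower (INR n) t / 200)%R.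
Proof.
move=> n Hn Ht Hlcs HL _ Hf1 Hfq L' HL' x' upi Hpi R0L' uR0 HR0 Hlis pis Hrun.
case: Hlcs => Lx Ly _.
have L'L : subseq L' L := filter_subseq _ _.
have Hsym : forall a, a \in L' -> a \in x'.
  move=> a; rewrite mem_filter => /andP[/andP[h1 _] aL].
  rewrite mem_filter (mem_subseq Lx aL) andbT /sigma_cc.
  rewrite (leq_trans h1 (leq_count_subseq _ Lx)) /=.
  by apply: leq_trans (count_size _ _) _; rewrite /n leq_addr.
have R0pi : {subset R0 <= pi}.
  by move=> a; rewrite HR0 Hpi; apply: Hsym.
have R0L : subseq R0 L := subseq_trans R0L' L'L.
have R0x' : subseq R0 x'.
  rewrite subseq_filter (subseq_trans R0L Lx) andbT.
  apply/allP => a; rewrite HR0 => /Hsym; rewrite mem_filter => /andP[] //.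
have R0y : subseq R0 y := subseq_trans R0L Ly.
have Hfx' : forall a, a \in x' -> f <= count_mem a x'.
  move=> a; rewrite mem_filter => /andP[ha _].
  rewrite count_filter (@eq_count _ _ (pred1 a)).
    by case/andP: ha.
  by move=> z /=; case: eqP => // ->; rewrite ha.
case: (classic (exists2 p, p \in pis & (INR (lis_len p y) >= Rpower (INR n) t / 200)%R)) => // hneg.
exfalso.
have hall : forall p, p \in pis -> (INR (lis_len p y) < Rpower (INR n) t / 200)%R.
  move=> p pp; apply: Rnot_ge_lt => h; apply: hneg; by exists p.
have HN2 : (2 <= INR n)%R by rewrite -[2%R]/(INR 2); apply: le_INR; apply/leP.
have Hu0 : (0 < Rpower (INR n) t)%R by rewrite /Rpower; apply: exp_pos.
set M := foldr (fun p acc => maxn (lis_len p y) acc) 0 pis.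
have HM : forall p, p \in pis -> lis_len p y <= M.
  rewrite /M; elim: (pis) => [|q ps IH] // p; rewrite inE => /orP[/eqP ->|pp] /=.
    exact: leq_maxl.
  by apply: leq_trans (IH _ pp) (leq_maxr _ _).
have HMr : (INR M < Rpower (INR n) t / 200)%R.
  rewrite /M; elim: (pis) hall => [|q ps IH] hall' /=.
    by apply: Rdiv_lt_0_compat => //; lra.
  rewrite /maxn; case: ltnP => h.
    by apply: IH => p pp; apply: hall'; rewrite inE pp orbT.
  by apply: hall'; exact: mem_head.
set l := best (sorted (lt_pi pi)) R0.
have El : lis_len pi R0 = l.
  by rewrite /lis_len /Project (all_filterP _); last by apply/allP.
have [H1 H2] := peel_claim R0pi uR0 R0y Hrun R0x' (subseq_refl R0) Hfx' HM.
have Hx' : size x' <= n by rewrite /n; apply: leq_trans (size_subseq (filter_subseq _ _)) _; rewrite ?leq_addr //.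
have H3 : size L' <= 2 * f * size R0.
  have -> : size R0 = size (undup L').
    apply/esym/perm_size/uniq_perm => //; first exact: undup_uniq.
    by move=> z; rewrite mem_undup HR0.
  apply: size_undup_bound => a aL'.
  have := aL'; rewrite mem_filter => /andP[/andP[_ h2] _].
  rewrite /L' /Project count_filter (@eq_count _ _ (pred1 a)).
    by apply: ltnW.
  move=> z /=; case: eqP => // ->; move: aL'; rewrite mem_filter => /andP[hh _]; by rewrite hh.
have Hnat := nat_contra H1 (leq_trans H2 Hx').
move/leP/le_INR: Hnat; rewrite -!multE -!plusE !plus_INR !mult_INR => Hnat.
move/leP/le_INR: H3; rewrite -!multE !mult_INR => H3.
set N := INR n in HN2 Hu0 HMr Hnat Hfq HL HL' Hlis.
set q := Rpower N (1/4) in Hfq.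
set u := Rpower N t in Hu0 HMr Hlis.
have HN1 : (1 <= N)%R by lra.
have Hq1 : (1 <= q)%R.
  have h : (Rpower N 0 <= q)%R by apply: Rle_Rpower => //; lra.
  by rewrite Rpower_O in h; lra.
have Hu1 : (1 <= u)%R.
  have h : (Rpower N 0 <= u)%R by apply: Rle_Rpower => //; lra.
  by rewrite Rpower_O in h; lra.
have Huq : (u <= q)%R by apply: Rle_Rpower => //; lra.
have Hln2 := ln_lt_2.
have HlnN : (ln 2 <= ln N)%R.
  case: (Rle_lt_or_eq_dec _ _ HN2) => h; last by rewrite h; lra.
  by apply: Rlt_le; apply: ln_increasing => //; lra.
have Hlg : (1 <= log2R N)%R.
  rewrite /log2R /Rdiv -(Rinv_r (ln 2)); last lra.
  apply: Rmult_le_compat_r => //; apply: Rlt_le; apply: Rinv_0_lt_compat; lra.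
have HNq : N = (q*q*q*q)%R.
  rewrite /q -!Rpower_plus.
  have -> : (1/4 + 1/4 + 1/4 + 1/4 = 1)%R by lra.
  by rewrite Rpower_1 //; lra.
have HLq : INR (size L) = (q*q*q*u)%R.
  rewrite HL /q /u -!Rpower_plus.
  by have -> : (1/4 + 1/4 + 1/4 + t = 3/4 + t)%R by lra.
rewrite El in Hlis.
apply: (@real_contra q u (log2R N) (INR f) (INR (size R0)) (INR l) (INR M) (INR (size L)) (INR (size L'))) => //.
all: try exact: pos_INR.
rewrite -HNq; move: Hnat; rewrite /N.
have -> : INR 8 = 8%R by rewrite /=; lra.
have -> : INR 4 = 4%R by rewrite /=; lra.
by [].
Qed.
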